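(* For every integer $n\ge 1$, $$ \nu_3(T(n))=\begin{cases} 0, & n\equiv 1,2,3,4,5,6,8,10,11\pmod{13};\\ 1, & n\equiv 7\pmod{13};\\ \nu_3(n)+2, & n\equiv 0\pmod{13};\\ \nu_3(n+1)+2, & n\equiv 12\pmod{13};\\ 4, & n\equiv 9\pmod{39};\\ \nu_3(n+17)+4, & n\equiv 22\pmod{39};\\ \nu_3(n+4)+4, & n\equiv 35\pmod{39}. \end{cases} $$
   Context: $T:\mathbb Z\to\mathbb Z$ is the Tribonacci sequence defined by $T(0)=0$, $T(1)=T(2)=1$ and $T(n+3)=T(n+2)+T(n+1)+T(n)$ for all $n\in\mathbb Z$. For a prime $p$, $\nu_p$ denotes the $p$-adic valuation (exponent of $p$), with $\nu_p(0)=+\infty$. *)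

(* Defs.v *)
From mathcomp Require Import all_boot.
Set Implicit Arguments. Unset Strict Implicit. Unset Printing Implicit Defensive.

(* Tribonacci: T 0 = 0, T 1 = T 2 = 1, T (n+3) = T (n+2) + T (n+1) + T n.
   Only nonnegative indices are needed (the theorem is about n >= 1), and
   there all values are natural numbers. *)
Fixpoint trib (n : nat) : nat :=
  match n with
  | 0 => 0
  | 1 => 1
  | 2 => 1
  | ((m.+1 as k).+1 as j).+1 => trib j + trib k + trib m
  end.

(* 3-adic valuation of a positive natural number: logn 3 m
   (the exponent of 3 in m; T n > 0 for n >= 1, so no infinity case). *)

(* Main.v *)
Require Import Defs.
From Stdlib Require Import ZArith Lia.
From mathcomp Require Import all_boot.
From mathcomp Require Import zify.

Local Open Scope Z_scope.

Definition tri := (Z * Z * Z)%type.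
Definition q1 (A : tri) : Z := let '(a, _, _) := A in a.
Definition q2 (A : tri) : Z := let '(_, b, _) := A in b.
Definition q3 (A : tri) : Z := let '(_, _, c) := A in c.

Definition tmul (A B : tri) : tri :=
  let '(a0, a1, a2) := A in let '(b0, b1, b2) := B in
  let c0 := a0 * b0 in let c1 := a0 * b1 + a1 * b0 in
  let c2 := a0 * b2 + a1 * b1 + a2 * b0 in
  let c3 := a1 * b2 + a2 * b1 in let c4 := a2 * b2 in
  (c0 + c3 + c4, c1 + c3 + 2 * c4, c2 + c3 + 2 * c4).

Definition xmul (A : tri) : tri := let '(a, b, c) := A in (c, a + c, b + c).

Fixpoint pw (n : nat) : tri := match n with O => (1, 0, 0) | S m => xmul (pw m) end.

Lemma xmul_tmul A B : xmul (tmul A B) = tmul (xmul A) B.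
Proof.
destruct A as [[a0 a1] a2]; destruct B as [[b0 b1] b2].
cbv beta iota zeta delta [tmul xmul]. f_equal; [f_equal|]; ring.
Qed.

Lemma pw_add m n : pw (m + n)%nat = tmul (pw m) (pw n).
Proof.
induction m as [|m IH].
- rewrite add0n. change (pw 0) with (1,0,0). destruct (pw n) as [[b0 b1] b2]; cbv beta iota zeta delta [tmul]. f_equal; [f_equal|]; ring.
- rewrite addSn. change (pw (m + n).+1) with (xmul (pw (m + n))). rewrite IH xmul_tmul. reflexivity.
Qed.

Definition cube (A : tri) := tmul A (tmul A A).

Lemma pw_mul3 n : pw (3 * n)%nat = cube (pw n).
Proof.
have -> : (3 * n = n + (n + n))%nat by lia.
by rewrite !pw_add.
Qed.

Fixpoint Ut (n : nat) : tri :=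
  match n with O => (0, 56, -47) | S m => let '(a, b, c) := Ut m in (b, c, a + b + c) end.
Definition U (n : nat) : Z := q1 (Ut n).

Lemma U_rec n : U (S (S (S n))) = U n + U (S n) + U (S (S n)).
Proof.
unfold U; simpl. destruct (Ut n) as [[a b] c]; simpl. ring.
Qed.

Lemma U_trib k : U (k + 17)%nat = Z.of_nat (trib k).
Proof.
suff H : forall k, U (k + 17) = Z.of_nat (trib k) /\ U (S k + 17) = Z.of_nat (trib (S k))
   /\ U (S (S k) + 17) = Z.of_nat (trib (S (S k))) by apply H.
elim=> [|j [H1 [H2 H3]]]; first by split; [|split]; vm_compute.
split; [exact H2|split; [exact H3|]].
have -> : (S (S (S j)) + 17 = S (S (S (j + 17))))%nat by lia.
rewrite U_rec.
have E : trib (S (S (S j))) = (trib (S (S j)) + trib (S j) + trib j)%nat by [].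
rewrite E.
have -> : (S (j + 17) = S j + 17)%nat by lia.
have -> : (S (S (j + 17)) = S (S j) + 17)%nat by lia.
rewrite H1 H2 H3. lia.
Qed.

Definition l (k : nat) (A : tri) := q1 A * U k + q2 A * U (S k) + q3 A * U (S (S k)).

Lemma U_pw N k : U (N + k)%nat = l k (pw N).
Proof.
elim: N k => [|N IH] k.
- rewrite add0n /l. change (pw 0) with ((1,0,0) : tri).
  cbv beta iota delta [q1 q2 q3]. ring.
- have -> : (S N + k = N + S k)%nat by lia.
  rewrite IH /l. change (pw N.+1) with (xmul (pw N)).
  destruct (pw N) as [[a b] c]. cbv beta iota delta [q1 q2 q3 xmul].
  rewrite U_rec. ring.
Qed.

Fixpoint e3 (n : nat) : Z := match n with O => 1 | S m => 3 * e3 m end.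
Lemma e3S n : e3 (S n) = 3 * e3 n. Proof. reflexivity. Qed.
Lemma e3_add m n : e3 (m + n)%nat = e3 m * e3 n.
Proof. elim: m => [|m IH]; first by rewrite add0n; change (e3 0) with 1; ring.
rewrite addSn !e3S IH; ring. Qed.
Lemma e3_pos n : 0 < e3 n.
Proof. elim: n => [|n IH]; first by []. rewrite e3S; lia. Qed.

Lemma e3_split v b : (v <= 2 * b + 3)%nat ->
  81 * e3 b * e3 b = e3 v * (3 * e3 (2 * b + 3 - v)%nat).
Proof.
move=> H. rewrite -e3S -e3_add.
have -> : (v + S (2 * b + 3 - v) = b + b + 4)%nat by lia.
rewrite !e3_add. change (e3 4) with 81. ring.
Qed.

Lemma e3_split3 v b : (v <= 2 * b + 3)%nat ->
  243 * e3 b * e3 b = e3 (S v) * (3 * e3 (2 * b + 3 - v)%nat).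
Proof.
move=> H. rewrite e3S. have E := e3_split _ _ H. transitivity (3 * (81 * e3 b * e3 b)); [ring | rewrite E; ring].
Qed.

Definition near (b : nat) (A : tri) :=
  exists g f1 f2, A = (1 + 3 * e3 b * g, 9 * e3 b * f1, 9 * e3 b * f2).
Definition L (p q : Z) (A : tri) := p * q2 A + q * q3 A.

Lemma mod3_mul x : (3 * x) mod 3 = 0.
Proof. rewrite Z.mul_comm. apply Z.mod_mul. lia. Qed.

Lemma near_mul b A B : near b A -> near b B -> near b (tmul A B).
Proof.
move=> [g [f1 [f2 ->]]] [h [e1 [e2 ->]]].
rewrite /near. set Y := e3 b. clearbody Y.
exists (1 * h + 1 * g + 27 * Y * f2 * e2 + 27 * Y * f2 * e1 + 27 * Y * f1 * e2 + 3 * Y * g * h), (1 * e1 + 1 * f1 + 18 * Y * f2 * e2 + 9 * Y * f2 * e1 + 9 * Y * f1 * e2 + 3 * Y * f1 * h + 3 * Y * g * e1), (1 * e2 + 1 * f2 + 18 * Y * f2 * e2 + 9 * Y * f2 * e1 + 3 * Y * f2 * h + 9 * Y * f1 * e2 + 9 * Y * f1 * e1 + 3 * Y * g * e2).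
cbv beta iota zeta delta [tmul]. f_equal; [f_equal|]; ring.
Qed.

Lemma L_mul b A B p q v wA wB : near b A -> near b B -> (v <= 2 * b + 3)%nat ->
  L p q A = e3 v * wA -> L p q B = e3 v * wB ->
  exists w, L p q (tmul A B) = e3 v * w /\ (w - wA - wB) mod 3 = 0.
Proof.
move=> [g [f1 [f2 HA]]] [h [e1 [e2 HB]]] Hv HLA HLB.
have Hs := e3_split _ _ Hv.
set Y := e3 b in HA HB Hs *.
set r := e3 (2 * b + 3 - v)%nat in Hs *. clearbody Y r.
have K : L p q (tmul A B) = (1 + 3 * Y * h) * L p q A + (1 + 3 * Y * g) * L p q B
   + 81 * Y * Y * (p * (2 * f2 * e2 + 1 * f2 * e1 + 1 * f1 * e2) + q * (2 * f2 * e2 + 1 * f2 * e1 + 1 * f1 * e2 + 1 * f1 * e1)).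
{ rewrite HA HB. cbv beta iota zeta delta [tmul L q2 q3]. ring. }
exists ((1 + 3 * Y * h) * wA + (1 + 3 * Y * g) * wB + 3 * r * (p * (2 * f2 * e2 + 1 * f2 * e1 + 1 * f1 * e2) + q * (2 * f2 * e2 + 1 * f2 * e1 + 1 * f1 * e2 + 1 * f1 * e1))).
split.
- rewrite K HLA HLB Hs. ring.
- have -> : (1 + 3 * Y * h) * wA + (1 + 3 * Y * g) * wB + 3 * r * (p * (2 * f2 * e2 + 1 * f2 * e1 + 1 * f1 * e2) + q * (2 * f2 * e2 + 1 * f2 * e1 + 1 * f1 * e2 + 1 * f1 * e1)) - wA - wB
     = 3 * (Y * h * wA + Y * g * wB + r * (p * (2 * f2 * e2 + 1 * f2 * e1 + 1 * f1 * e2) + q * (2 * f2 * e2 + 1 * f2 * e1 + 1 * f1 * e2 + 1 * f1 * e1))) by ring.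
  apply mod3_mul.
Qed.

Lemma near_cube b A : near b A -> near (S b) (cube A).
Proof.
move=> [g [f1 [f2 ->]]].
rewrite /near. set Y := e3 b.
exists (1 * g + 27 * Y * f2 * f2 + 54 * Y * f1 * f2 + 3 * Y * g * g + 324 * Y * Y * f2 * f2 * f2 + 486 * Y * Y * f1 * f2 * f2 + 243 * Y * Y * f1 * f1 * f2 + 81 * Y * Y * f1 * f1 * f1 + 81 * Y * Y * g * f2 * f2 + 162 * Y * Y * g * f1 * f2 + 3 * Y * Y * g * g * g), (1 * f1 + 18 * Y * f2 * f2 + 18 * Y * f1 * f2 + 6 * Y * g * f1 + 162 * Y * Y * f2 * f2 * f2 + 243 * Y * Y * f1 * f2 * f2 + 162 * Y * Y * f1 * f1 * f2 + 27 * Y * Y * f1 * f1 * f1 + 54 * Y * Y * g * f2 * f2 + 54 * Y * Y * g * f1 * f2 + 9 * Y * Y * g * g * f1), (1 * f2 + 18 * Y * f2 * f2 + 18 * Y * f1 * f2 + 9 * Y * f1 * f1 + 6 * Y * g * f2 + 189 * Y * Y * f2 * f2 * f2 + 324 * Y * Y * f1 * f2 * f2 + 162 * Y * Y * f1 * f1 * f2 + 27 * Y * Y * f1 * f1 * f1 + 54 * Y * Y * g * f2 * f2 + 54 * Y * Y * g * f1 * f2 + 27 * Y * Y * g * f1 * f1 + 9 * Y * Y * g * g * f2).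
change (e3 (S b)) with (3 * Y). clearbody Y.
cbv beta iota zeta delta [cube tmul]. f_equal; [f_equal|]; ring.
Qed.

Lemma L_cube b A p q v w : near b A -> (v <= 2 * b + 3)%nat ->
  L p q A = e3 v * w ->
  exists w', L p q (cube A) = e3 (S v) * w' /\ (w' - w) mod 3 = 0.
Proof.
move=> [g [f1 [f2 HA]]] Hv HLA.
have Hs := e3_split3 _ _ Hv.
set Y := e3 b in HA Hs *.
set r := e3 (2 * b + 3 - v)%nat in Hs *. clearbody Y r.
have K : L p q (cube A) = 3 * ((1 + 3 * Y * g) * (1 + 3 * Y * g)) * L p q A
   + 243 * Y * Y * (p * (2 * f2 * f2 + 2 * f1 * f2 + 18 * Y * f2 * f2 * f2 + 27 * Y * f1 * f2 * f2 + 18 * Y * f1 * f1 * f2 + 3 * Y * f1 * f1 * f1 + 6 * Y * g * f2 * f2 + 6 * Y * g * f1 * f2) + q * (2 * f2 * f2 + 2 * f1 * f2 + 1 * f1 * f1 + 21 * Y * f2 * f2 * f2 + 36 * Y * f1 * f2 * f2 + 18 * Y * f1 * f1 * f2 + 3 * Y * f1 * f1 * f1 + 6 * Y * g * f2 * f2 + 6 * Y * g * f1 * f2 + 3 * Y * g * f1 * f1)).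
{ rewrite HA. cbv beta iota zeta delta [cube tmul L q2 q3]. ring. }
exists ((1 + 3 * Y * g) * (1 + 3 * Y * g) * w + 3 * r * (p * (2 * f2 * f2 + 2 * f1 * f2 + 18 * Y * f2 * f2 * f2 + 27 * Y * f1 * f2 * f2 + 18 * Y * f1 * f1 * f2 + 3 * Y * f1 * f1 * f1 + 6 * Y * g * f2 * f2 + 6 * Y * g * f1 * f2) + q * (2 * f2 * f2 + 2 * f1 * f2 + 1 * f1 * f1 + 21 * Y * f2 * f2 * f2 + 36 * Y * f1 * f2 * f2 + 18 * Y * f1 * f1 * f2 + 3 * Y * f1 * f1 * f1 + 6 * Y * g * f2 * f2 + 6 * Y * g * f1 * f2 + 3 * Y * g * f1 * f1))).
split.
- rewrite K HLA Hs e3S. ring.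
- have -> : (1 + 3 * Y * g) * (1 + 3 * Y * g) * w + 3 * r * (p * (2 * f2 * f2 + 2 * f1 * f2 + 18 * Y * f2 * f2 * f2 + 27 * Y * f1 * f2 * f2 + 18 * Y * f1 * f1 * f2 + 3 * Y * f1 * f1 * f1 + 6 * Y * g * f2 * f2 + 6 * Y * g * f1 * f2) + q * (2 * f2 * f2 + 2 * f1 * f2 + 1 * f1 * f1 + 21 * Y * f2 * f2 * f2 + 36 * Y * f1 * f2 * f2 + 18 * Y * f1 * f1 * f2 + 3 * Y * f1 * f1 * f1 + 6 * Y * g * f2 * f2 + 6 * Y * g * f1 * f2 + 3 * Y * g * f1 * f1)) - w
     = 3 * (2 * Y * g * w + 3 * Y * Y * g * g * w + r * (p * (2 * f2 * f2 + 2 * f1 * f2 + 18 * Y * f2 * f2 * f2 + 27 * Y * f1 * f2 * f2 + 18 * Y * f1 * f1 * f2 + 3 * Y * f1 * f1 * f1 + 6 * Y * g * f2 * f2 + 6 * Y * g * f1 * f2) + q * (2 * f2 * f2 + 2 * f1 * f2 + 1 * f1 * f1 + 21 * Y * f2 * f2 * f2 + 36 * Y * f1 * f2 * f2 + 18 * Y * f1 * f1 * f2 + 3 * Y * f1 * f1 * f1 + 6 * Y * g * f2 * f2 + 6 * Y * g * f1 * f2 + 3 * Y * g * f1 * f1))) by ring.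
  apply mod3_mul.
Qed.

Lemma near_one b : near b (1, 0, 0).
Proof. exists 0, 0, 0. f_equal; [f_equal|]; ring. Qed.

Lemma near_all b0 N0 : near b0 (pw N0) -> forall t, near b0 (pw (N0 * t)%nat).
Proof.
move=> H0. elim=> [|t IH].
- rewrite muln0. exact: near_one.
- rewrite mulnS pw_add. exact: near_mul.
Qed.

Lemma near_pow3 b N : near b (pw N) -> forall j, near (b + j)%nat (pw (expn 3 j * N)%nat).
Proof.
move=> H. elim=> [|j IH].
- by rewrite addn0 expn0 mul1n.
- rewrite expnS -mulnA pw_mul3 addnS. exact: near_cube.
Qed.

Lemma mod3_prod x y : x mod 3 <> 0 -> y mod 3 <> 0 -> (x * y) mod 3 <> 0.
Proof.
move=> Hx Hy. rewrite Z.mul_mod; last lia.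
have Bx := Z.mod_pos_bound x 3 ltac:(lia). have By := Z.mod_pos_bound y 3 ltac:(lia).
have Hx' : x mod 3 = 1 \/ x mod 3 = 2 by lia.
have Hy' : y mod 3 = 1 \/ y mod 3 = 2 by lia.
case: Hx' => ->; case: Hy' => ->; discriminate.
Qed.

Lemma L_one p q : L p q (1, 0, 0) = 0.
Proof. rewrite /L /=. ring. Qed.

Lemma main_val b0 N0 p q v0 w0 :
  near b0 (pw N0) -> L p q (pw N0) = e3 v0 * w0 -> w0 mod 3 <> 0 ->
  (v0 <= 2 * b0 + 3)%nat ->
  forall t, (0 < t)%nat -> exists w,
    L p q (pw (N0 * t)%nat) = e3 (v0 + logn 3 t)%nat * w /\ w mod 3 <> 0.
Proof.
move=> Hn HL Hw0 Hv.
have lin : forall t, exists w, L p q (pw (N0 * t)%nat) = e3 v0 * w /\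
    (w - Z.of_nat t * w0) mod 3 = 0.
{ elim=> [|t [wt [Ht Htm]]].
  - exists 0. rewrite muln0. change (pw 0) with ((1,0,0) : tri). rewrite L_one. split; first ring.
    by [].
  - have [w [Hw Hwm]] := L_mul b0 _ _ p q v0 _ _ Hn (near_all b0 N0 Hn t) Hv HL Ht.
    exists w. rewrite mulnS pw_add. split; first exact Hw.
    rewrite Nat2Z.inj_succ.
    have -> : (Z.succ (Z.of_nat t) * w0) = Z.of_nat t * w0 + w0 by ring.
    move: Htm Hwm. set X := Z.of_nat t * w0. Z.div_mod_to_equations; lia. }
have all : forall t, (0 < t)%nat -> near (b0 + logn 3 t)%nat (pw (N0 * t)%nat) /\ exists w,
    L p q (pw (N0 * t)%nat) = e3 (v0 + logn 3 t)%nat * w /\ w mod 3 <> 0.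
{ elim/ltn_ind=> t IH tpos.
  case: (boolP (3 %| t)%nat) => H3.
  - have ht : t = (3 * (t %/ 3))%nat by rewrite mulnC divnK.
    have t'pos : (0 < t %/ 3)%nat by lia.
    have t'lt : (t %/ 3 < t)%nat by lia.
    have [IHn [w [IHw IHm]]] := IH _ t'lt t'pos.
    have hl : logn 3 t = (logn 3 (t %/ 3)).+1.
    { rewrite {1}ht lognM //. }
    have hp : pw (N0 * t)%nat = cube (pw (N0 * (t %/ 3))%nat).
    { rewrite -pw_mul3. congr pw. rewrite {1}ht. lia. }
    rewrite hl hp addnS. split; first exact: near_cube.
    have [w' [Hw' Hwm']] := L_cube _ _ p q (v0 + logn 3 (t %/ 3))%nat w IHn ltac:(lia) IHw.
    exists w'. rewrite addnS. split; first exact Hw'.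
    move: Hwm' IHm. Z.div_mod_to_equations; lia.
  - have hl : logn 3 t = 0%nat by apply: logn_coprime; rewrite prime_coprime.
    rewrite hl !addn0. split; first exact: near_all.
    have [w [Hw Hwm]] := lin t. exists w. split; first exact Hw.
    have Ht3 : Z.of_nat t mod 3 <> 0.
    { have E := divn_eq t 3. have Hr : (t %% 3 < 3)%nat by rewrite ltn_mod.
      have Hr0 : (t %% 3 != 0)%nat by [].
      move: E Hr Hr0. set r := (t %% 3)%nat. set qq := (t %/ 3)%nat. move=> E Hr Hr0.
      have Ez : Z.of_nat t = 3 * Z.of_nat qq + Z.of_nat r by rewrite E; lia.
      have Hr1 : (1 <= r <= 2)%nat by lia.
      rewrite Ez. Z.div_mod_to_equations; lia. }
    have := mod3_prod _ _ Ht3 Hw0. move: Hwm. set X := Z.of_nat t * w0. Z.div_mod_to_equations; lia. }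
move=> t tpos. by case: (all t tpos).
Qed.

Lemma e3_nat v : e3 v = Z.of_nat (expn 3 v).
Proof. elim: v => [|v IH]; first by []. rewrite e3S expnS IH. lia. Qed.

Lemma logn_of_Z (m : nat) v w : Z.of_nat m = e3 v * w -> w mod 3 <> 0 -> logn 3 m = v.
Proof.
move=> Hm Hw.
have Hp := e3_pos v.
have Hw0 : 0 <= w by nia.
have Hwn : w = Z.of_nat (Z.to_nat w) by lia.
set wn := Z.to_nat w in Hwn.
have Em : m = (expn 3 v * wn)%nat.
{ apply: Nat2Z.inj. rewrite Hm Hwn e3_nat. lia. }
have wpos : (0 < wn)%nat.
{ case: (posnP wn) => // H0. exfalso. apply: Hw. rewrite Hwn H0. by []. }
rewrite Em lognM ?expn_gt0 // pfactorK // logn_coprime ?addn0 //.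
rewrite prime_coprime //. apply/negP => /dvdnP [k Hk].
apply: Hw. rewrite Hwn Hk. have -> : Z.of_nat (k * 3)%nat = 3 * Z.of_nat k by lia.
apply: mod3_mul.
Qed.

Lemma near_l b A k : near b A -> exists z, l k A = U k + e3 (S b) * z.
Proof.
move=> [g [f1 [f2 ->]]].
exists (g * U k + 3 * f1 * U (S k) + 3 * f2 * U (S (S k))).
rewrite /l e3S. cbv beta iota delta [q1 q2 q3]. ring.
Qed.

Lemma val_shift x v z : (x mod e3 (S v) = e3 v \/ x mod e3 (S v) = 2 * e3 v) ->
  exists w, x + e3 (S v) * z = e3 v * w /\ w mod 3 <> 0.
Proof.
rewrite e3S. have Hp := e3_pos v. set E := e3 v in Hp *. clearbody E. move=> H.
have D := Z.div_mod x (3 * E) ltac:(lia).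
set qq := x / (3 * E) in D. clearbody qq.
case: H => H; rewrite H in D.
- exists (3 * qq + 1 + 3 * z). split; first by rewrite D; ring.
  Z.div_mod_to_equations; lia.
- exists (3 * qq + 2 + 3 * z). split; first by rewrite D; ring.
  Z.div_mod_to_equations; lia.
Qed.

Definition okv (v : nat) (x : Z) : bool :=
  let m := x mod e3 (S v) in Z.eqb m (e3 v) || Z.eqb m (2 * e3 v).

Lemma okvP v x : okv v x -> (x mod e3 (S v) = e3 v \/ x mod e3 (S v) = 2 * e3 v).
Proof. rewrite /okv => /orP [/Z.eqb_eq H|/Z.eqb_eq H]; [left|right]; exact H. Qed.

Lemma near13 : near 0 (pw 13). Proof. exists 91, 47, 56. vm_compute. reflexivity. Qed.
Lemma near39 : near 1 (pw 39).
Proof. exists 231430678, 119085665, 141889127. vm_compute. reflexivity. Qed.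

Lemma chkA : all (fun r => okv 0 (U (r + 17)%nat)) [:: 1; 2; 3; 4; 5; 6; 8; 10; 11]%nat.
Proof. vm_compute. reflexivity. Qed.
Lemma chkB : all (fun r => (r %% 13 != 7)%nat || okv 1 (U (r + 17)%nat)) (iota 0 39).
Proof. vm_compute. reflexivity. Qed.
Lemma chkC : all (fun r => (r %% 39 != 9)%nat || okv 4 (U (r + 17)%nat)) (iota 0 1053).
Proof. vm_compute. reflexivity. Qed.

Lemma periodic b N0 t r v : near b (pw (N0 * t)%nat) -> (v <= b)%nat ->
  okv v (U (r + 17)%nat) -> logn 3 (trib (N0 * t + r)%nat) = v.
Proof.
move=> Hn Hvb Hok.
have [z Hz] := near_l _ _ (r + 17)%nat Hn.
have Hz' : exists z', l (r + 17)%nat (pw (N0 * t)%nat) = U (r + 17)%nat + e3 (S v) * z'.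
{ exists (e3 (b - v)%nat * z). rewrite Hz.
  have -> : (S b = S v + (b - v))%nat by lia. rewrite e3_add. ring. }
case: Hz' => z' Hz'.
have [w [Hw Hwm]] := val_shift _ _ z' (okvP _ _ Hok).
apply: (logn_of_Z _ v w) => //.
rewrite -U_trib.
have -> : (N0 * t + r + 17 = N0 * t + (r + 17))%nat by lia.
by rewrite U_pw Hz'.
Qed.

Lemma l_L k A : U k = 0 -> l k A = L (U (S k)) (U (S (S k))) A.
Proof. move=> H. rewrite /l /L H. ring. Qed.

Lemma unb N0 b0 k v0 w0 t n : near b0 (pw N0) -> U k = 0 ->
  L (U (S k)) (U (S (S k))) (pw N0) = e3 v0 * w0 -> w0 mod 3 <> 0 ->
  (v0 <= 2 * b0 + 3)%nat -> (0 < t)%nat -> (n + 17 = N0 * t + k)%nat ->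
  logn 3 (trib n) = (v0 + logn 3 t)%nat.
Proof.
move=> Hn Hk HL Hw0 Hv tpos En.
have [w [Hw Hwm]] := main_val _ _ _ _ _ _ Hn HL Hw0 Hv t tpos.
apply: (logn_of_Z _ _ w) => //.
by rewrite -U_trib En U_pw l_L.
Qed.

Lemma logn39 t : (0 < t)%nat -> logn 3 (39 * t)%nat = (logn 3 t).+1.
Proof.
move=> tpos. have -> : (39 * t = 3 * (13 * t))%nat by lia.
rewrite lognM // ?muln_gt0 // logn_Gauss //.
Qed.

Lemma logn13 t : logn 3 (13 * t)%nat = logn 3 t.
Proof. by rewrite logn_Gauss. Qed.

Local Close Scope Z_scope.

Theorem theorem3 (n : nat) : 1 <= n ->
  (n %% 13 \in [:: 1; 2; 3; 4; 5; 6; 8; 10; 11] -> logn 3 (trib n) = 0) /\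
  (n %% 13 = 7 -> logn 3 (trib n) = 1) /\
  (n %% 13 = 0 -> logn 3 (trib n) = logn 3 n + 2) /\
  (n %% 13 = 12 -> logn 3 (trib n) = logn 3 (n + 1) + 2) /\
  (n %% 39 = 9 -> logn 3 (trib n) = 4) /\
  (n %% 39 = 22 -> logn 3 (trib n) = logn 3 (n + 17) + 4) /\
  (n %% 39 = 35 -> logn 3 (trib n) = logn 3 (n + 4) + 4).
Proof.
move=> n1.
have E13 := divn_eq n 13. have E39 := divn_eq n 39. have E1053 := divn_eq n 1053.
set q13 := n %/ 13 in E13 *. set q39 := n %/ 39 in E39 *. set q1053 := n %/ 1053 in E1053 *.
split; [|split; [|split; [|split; [|split; [|split]]]]].
- move=> Hr.
  have -> : n = 13 * q13 + n %% 13 by lia.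
  apply: (periodic 0) => //.
  + exact: near_all near13 _.
  + exact: (allP chkA).
- move=> Hr.
  have -> : n = 39 * q39 + n %% 39 by lia.
  apply: (periodic 1) => //.
  + exact: near_all near39 _.
  + have := allP chkB (n %% 39).
    rewrite mem_iota add0n ltn_mod /= modn_dvdm // Hr /=. by apply.
- move=> Hr.
  have -> : logn 3 n = logn 3 q13 by rewrite {1}E13 Hr addn0 mulnC logn13.
  rewrite addnC. apply: (unb 13 0 17 2 103 q13 n near13); [ vm_compute; reflexivity | vm_compute; reflexivity | discriminate | by [] | lia | lia ].
- move=> Hr.
  have -> : n + 1 = 13 * q13.+1 by lia.
  rewrite logn13 addnC. apply: (unb 13 0 16 2 56 q13.+1 n near13); [ vm_compute; reflexivity | vm_compute; reflexivity | discriminate | by [] | lia | lia ].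
- move=> Hr.
  have -> : n = 1053 * q1053 + n %% 1053 by lia.
  apply: (periodic 4) => //.
  + have -> : 1053 * q1053 = expn 3 3 * (39 * q1053) by rewrite mulnA.
    exact: (near_pow3 1 _ (near_all _ _ near39 _) 3).
  + have := allP chkC (n %% 1053).
    rewrite mem_iota add0n ltn_mod /= modn_dvdm // Hr /=. by apply.
- move=> Hr.
  have -> : n + 17 = 39 * q39.+1 by lia.
  rewrite logn39 // -addSnnS addnC. apply: (unb 39 1 0 5 919 q39.+1 n near39); [ vm_compute; reflexivity | vm_compute; reflexivity | discriminate | by [] | lia | lia ].
- move=> Hr.
  have -> : n + 4 = 39 * q39.+1 by lia.
  rewrite logn39 // -addSnnS addnC. apply: (unb 39 1 13 5 2533718 q39.+1 n near39); [ vm_compute; reflexivity | vm_compute; reflexivity | discriminate | by [] | lia | lia ].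
Qed.
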